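(* Let $\mathfrak{g}=V\rtimes\mathfrak{h}$ with $V$ an abelian ideal and $\mathfrak{h}$ a complementary subalgebra, let $\zeta\in\mathcal{Q}_0(\mathfrak{g})$ be a continuous normalized Lie quasi-state and let $X\in\mathfrak{h}$. Then the function $\zeta_X:V\to\mathbb{R}$, $\zeta_X(v)=\zeta(v,X)$, satisfies $\lim_{v\to\infty}\zeta_X(v)/\|v\|=0$ for any norm on $V$.
   Context: A Lie quasi-state is $\zeta:\mathfrak{g}\to\mathbb{R}$ with $\zeta(aX+bY)=a\zeta(X)+b\zeta(Y)$ for all $a,b\in\mathbb{R}$ and commuting $X,Y$. It is normalized if $\zeta(v,0)=\zeta(0,X)=0$ for all $v\in V$, $X\in\mathfrak{h}$; $\mathcal{Q}_0(\mathfrak{g})$ denotes the continuous normalized Lie quasi-states. *)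

(* Defs.v *)
From Stdlib Require Fin.
From Stdlib Require Import Reals.
Open Scope R_scope.

(* Coordinates: V = R^n, h = R^m, vectors as functions on Fin.t n. *)
Definition vec (n : nat) := Fin.t n -> R.
Definition vzero {n} : vec n := fun _ => 0.
Definition vadd {n} (u w : vec n) : vec n := fun i => u i + w i.
Definition vscal {n} (a : R) (u : vec n) : vec n := fun i => a * u i.
Definition veq {n} (u w : vec n) : Prop := forall i, u i = w i.

(* A finite-dimensional real Lie algebra g = V ⋊ h: h = R^m with a Lie
   bracket hbr, acting on the abelian ideal V = R^n via a representation rho. *)
Record SemidirectLie (n m : nat) := {
  hbr : vec m -> vec m -> vec m;
  rho : vec m -> vec n -> vec n;
  hbr_linl : forall a b X Y Z,
      veq (hbr (vadd (vscal a X) (vscal b Y)) Z) (vadd (vscal a (hbr X Z)) (vscal b (hbr Y Z)));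
  hbr_linr : forall a b X Y Z,
      veq (hbr Z (vadd (vscal a X) (vscal b Y))) (vadd (vscal a (hbr Z X)) (vscal b (hbr Z Y)));
  hbr_alt : forall X, veq (hbr X X) vzero;
  hbr_jacobi : forall X Y Z,
      veq (vadd (hbr X (hbr Y Z)) (vadd (hbr Y (hbr Z X)) (hbr Z (hbr X Y)))) vzero;
  rho_linl : forall a b X Y v,
      veq (rho (vadd (vscal a X) (vscal b Y)) v) (vadd (vscal a (rho X v)) (vscal b (rho Y v)));
  rho_linr : forall a b X v w,
      veq (rho X (vadd (vscal a v) (vscal b w))) (vadd (vscal a (rho X v)) (vscal b (rho X w)));
  rho_hom : forall X Y v,
      veq (rho (hbr X Y) v) (vadd (rho X (rho Y v)) (vscal (-1) (rho Y (rho X v))))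
}.
Arguments hbr {n m} s _ _.
Arguments rho {n m} s _ _.

Definition gel (n m : nat) := (vec n * vec m)%type.

Definition gadd {n m} (x y : gel n m) : gel n m := (vadd (fst x) (fst y), vadd (snd x) (snd y)).
Definition gscal {n m} (a : R) (x : gel n m) : gel n m := (vscal a (fst x), vscal a (snd x)).

Definition gbr {n m} (s : SemidirectLie n m) (x y : gel n m) : gel n m :=
  (vadd (rho s (snd x) (fst y)) (vscal (-1) (rho s (snd y) (fst x))), hbr s (snd x) (snd y)).

Definition gcommute {n m} (s : SemidirectLie n m) (x y : gel n m) : Prop :=
  veq (fst (gbr s x y)) vzero /\ veq (snd (gbr s x y)) vzero.

Definition lie_quasi_state {n m} (s : SemidirectLie n m) (zeta : gel n m -> R) : Prop :=
  forall (a b : R) (x y : gel n m), gcommute s x y ->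
    zeta (gadd (gscal a x) (gscal b y)) = a * zeta x + b * zeta y.

Definition normalized {n m} (zeta : gel n m -> R) : Prop :=
  (forall v : vec n, zeta (v, vzero) = 0) /\ (forall X : vec m, zeta (vzero, X) = 0).

Definition g_continuous {n m} (zeta : gel n m -> R) : Prop :=
  forall (x : gel n m) (eps : R), 0 < eps -> exists delta, 0 < delta /\
    forall y : gel n m,
      (forall i, Rabs (fst y i - fst x i) < delta) ->
      (forall j, Rabs (snd y j - snd x j) < delta) ->
      Rabs (zeta y - zeta x) < eps.

Definition is_norm {n} (N : vec n -> R) : Prop :=
  (forall v, 0 <= N v) /\
  (forall v, N v = 0 -> veq v vzero) /\
  (forall a v, N (vscal a v) = Rabs a * N v) /\
  (forall v w, N (vadd v w) <= N v + N w).

Definition lim_ratio_infty_zero {n} (N : vec n -> R) (f : vec n -> R) : Prop :=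
  forall eps, 0 < eps -> exists M, forall v, M < N v -> Rabs (f v / N v) < eps.

(* Main.v *)
Require Import Defs.
From Stdlib Require Fin.
From Stdlib Require Import Reals Lra Lia ClassicalEpsilon Classical FunctionalExtensionality.
Open Scope R_scope.

Fixpoint build (g : nat -> nat -> nat) (k : nat) : nat :=
  match k with O => g O O | S k' => g k (S (build g k')) end.

Lemma inv_small eps : 0 < eps -> exists K:nat, / INR (S K) < eps.
Proof.
  intro He. destruct (archimed (/ eps)) as [H1 _].
  destruct (INR_unbounded (/eps)) as [K HK]. exists K.
  rewrite <- (Rinv_inv eps). apply Rinv_lt_contravar.
  - apply Rmult_lt_0_compat. apply Rinv_0_lt_compat; lra. apply lt_0_INR; lia.
  - rewrite S_INR; lra.
Qed.

Lemma BW_R (u : nat -> R) B : (forall k, Rabs (u k) <= B) ->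
  exists (phi : nat -> nat) (l : R), (forall k, (phi k < phi (S k))%nat) /\
   forall eps, 0 < eps -> exists K, forall k, (K <= k)%nat -> Rabs (u (phi k) - l) < eps.
Proof.
  intro HB.
  destruct (Bolzano_Weierstrass u (fun c => -B <= c <= B) (compact_P3 _ _)) as [l Hl].
  { intro k. specialize (HB k). revert HB; unfold Rabs; destruct (Rcase_abs (u k)); lra. }
  assert (G : forall k N : nat, {p | (N <= p)%nat /\ Rabs (u p - l) < / INR (S k)}).
  { intros k N. apply constructive_indefinite_description.
    assert (Hp : 0 < / INR (S k)) by (apply Rinv_0_lt_compat, lt_0_INR; lia).
    destruct (Hl (disc l (mkposreal _ Hp)) N) as [p [Hp1 Hp2]].
    - exists (mkposreal _ Hp). intros y Hy. exact Hy.
    - exists p. split; auto. }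
  set (g := fun k N => proj1_sig (G k N)).
  assert (Hg : forall k N, (N <= g k N)%nat /\ Rabs (u (g k N) - l) < / INR (S k))
    by (intros; unfold g; exact (proj2_sig (G k N))).
  exists (build g), l. split.
  - intro k. change (build g (S k)) with (g (S k) (S (build g k))).
    destruct (Hg (S k) (S (build g k))). lia.
  - intros eps He. destruct (inv_small eps He) as [K HK]. exists K. intros k Hk.
    assert (Hc : Rabs (u (build g k) - l) < / INR (S k)).
    { destruct k; simpl; apply Hg. }
    eapply Rlt_le_trans. exact Hc. eapply Rle_trans; [|left; exact HK].
    apply Rinv_le_contravar. apply lt_0_INR; lia. apply le_INR; lia.
Qed.

Lemma incr_strict (phi : nat -> nat) : (forall k, (phi k < phi (S k))%nat) ->
  forall a b, (a < b)%nat -> (phi a < phi b)%nat.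
Proof. intros H a b Hab. induction Hab. apply H. specialize (H m). lia. Qed.

Lemma incr_ge (phi : nat -> nat) : (forall k, (phi k < phi (S k))%nat) -> forall k, (k <= phi k)%nat.
Proof. intros H k. induction k. lia. specialize (H k). lia. Qed.

Fixpoint supn (n : nat) : vec n -> R :=
  match n return vec n -> R with
  | O => fun _ => 0
  | S n' => fun v => Rmax (Rabs (v Fin.F1)) (supn n' (fun i => v (Fin.FS i)))
  end.

Lemma supn_ge n : forall (v : vec n) i, Rabs (v i) <= supn n v.
Proof.
  induction n; intros v i.
  - exact (Fin.case0 (fun j => Rabs (v j) <= supn 0 v) i).
  - apply (Fin.caseS' i (fun j => Rabs (v j) <= supn (S n) v)); simpl.
    + apply Rmax_l.
    + intro j. eapply Rle_trans; [apply (IHn (fun i => v (Fin.FS i)) j)|apply Rmax_r].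
Qed.

Lemma supn_le n : forall (v : vec n) c, 0 <= c -> (forall i, Rabs (v i) <= c) -> supn n v <= c.
Proof.
  induction n; intros v c Hc H; simpl. exact Hc.
  apply Rmax_lub. apply H. apply IHn. exact Hc. intro; apply H.
Qed.

Lemma supn_scal n : forall (v : vec n) a, supn n (vscal a v) = Rabs a * supn n v.
Proof.
  induction n; intros v a; simpl. ring.
  rewrite <- (RmaxRmult _ _ _ (Rabs_pos a)). rewrite <- (IHn (fun i => v (Fin.FS i)) a). unfold vscal. rewrite Rabs_mult. reflexivity.

Qed.

Lemma BW_vec n : forall (u : nat -> vec n) B, (forall k i, Rabs (u k i) <= B) ->
  exists (phi : nat -> nat) (us : vec n), (forall k, (phi k < phi (S k))%nat) /\
   forall eps, 0 < eps -> exists K, forall k, (K <= k)%nat -> forall i, Rabs (u (phi k) i - us i) < eps.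
Proof.
  induction n; intros u B HB.
  - exists (fun k => k), (fun i => Fin.case0 _ i). split. intro; lia.
    intros eps He. exists O. intros k _ i. exact (Fin.case0 (fun j => Rabs (u k j - Fin.case0 (fun _ => R) j) < eps) i).
  - destruct (BW_R (fun k => u k Fin.F1) B) as [phi1 [l [Hi1 Hc1]]]. intro; apply HB.
    destruct (IHn (fun k i => u (phi1 k) (Fin.FS i)) B) as [phi2 [ts [Hi2 Hc2]]]. intros; apply HB.
    exists (fun k => phi1 (phi2 k)), (fun i => Fin.caseS' i (fun _ => R) l ts). split.
    + intro k. apply incr_strict; auto.
    + intros eps He. destruct (Hc1 eps He) as [K1 HK1]. destruct (Hc2 eps He) as [K2 HK2].
      exists (max K1 K2). intros k Hk i.
      apply (Fin.caseS' i (fun j => Rabs (u (phi1 (phi2 k)) j - Fin.caseS' j (fun _ => R) l ts) < eps)); simpl.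
      * apply HK1. pose proof (incr_ge _ Hi2 k). lia.
      * intro j. apply (HK2 k). lia.
Qed.

Lemma supn_ge0 n (v : vec n) : 0 <= supn n v.
Proof. destruct n; simpl. lra. eapply Rle_trans; [apply Rabs_pos|apply Rmax_l]. Qed.

Definition emb {n} (a : R) (w : vec n) : vec (S n) := fun i => Fin.caseS' i (fun _ => R) a w.

Ltac fincase i := pattern i; apply Fin.caseS'; [|intro]; simpl.

Lemma norm_upper n : forall N : vec n -> R, (forall v, 0 <= N v) ->
  (forall a v, N (vscal a v) = Rabs a * N v) -> (forall v w, N (vadd v w) <= N v + N w) ->
  exists C, 0 <= C /\ forall v, N v <= C * supn n v.
Proof.
  induction n; intros N N0 Nh Nt.
  - exists 0. split. lra. intro v.
    assert (E : v = vscal 0 v).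
    { extensionality i. exact (Fin.case0 (fun j => v j = vscal 0 v j) i). }
    rewrite E, Nh, Rabs_R0. lra.
  - destruct (IHn (fun w => N (emb 0 w))) as [C' [HC'0 HC']].
    + intro; apply N0.
    + intros a v. rewrite <- Nh. f_equal. extensionality i. unfold emb, vscal.
      fincase i; ring.
    + intros v w. eapply Rle_trans; [|apply Nt]. right. f_equal. extensionality i.
      unfold emb, vadd. fincase i; ring.
    + exists (N (emb 1 vzero) + C'). split. pose proof (N0 (emb 1 vzero)). lra.
      intro v.
      assert (E : v = vadd (vscal (v Fin.F1) (emb 1 vzero)) (emb 0 (fun i => v (Fin.FS i)))).
      { extensionality i. unfold vadd, vscal, emb, vzero. fincase i; ring. }
      rewrite E at 1. eapply Rle_trans. apply Nt. rewrite Nh.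
      specialize (HC' (fun i => v (Fin.FS i))).
      pose proof (Rmax_l (Rabs (v Fin.F1)) (supn n (fun i => v (Fin.FS i)))).
      pose proof (Rmax_r (Rabs (v Fin.F1)) (supn n (fun i => v (Fin.FS i)))).
      pose proof (N0 (emb 1 vzero)). pose proof (Rabs_pos (v Fin.F1)).
      change (supn (S n) v) with (Rmax (Rabs (v Fin.F1)) (supn n (fun i => v (Fin.FS i)))).
      nra.
Qed.

Lemma hom {n m} (s : SemidirectLie n m) zeta : lie_quasi_state s zeta ->
  forall t x, zeta (gscal t x) = t * zeta x.
Proof.
  intros H t x. specialize (H t 0 x x).
  assert (E : gadd (gscal t x) (gscal 0 x) = gscal t x).
  { destruct x as [v X]. unfold gadd, gscal; simpl. f_equal; extensionality i; unfold vadd, vscal; ring. }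
  rewrite E in H. rewrite H. ring.
  split; intro i; unfold gbr; simpl.
  - unfold vadd, vscal, vzero. ring.
  - apply hbr_alt.
Qed.

Theorem mainTheorem8 (n m : nat) (s : SemidirectLie n m) (zeta : gel n m -> R) :
  lie_quasi_state s zeta -> g_continuous zeta -> normalized zeta ->
  forall (X : vec m) (N : vec n -> R), is_norm N ->
    lim_ratio_infty_zero N (fun v => zeta (v, X)).
Proof.
  intros Hq Hc [Hn1 Hn2] X N [N0 [Ndef [Nh Nt]]] eps He.
  destruct (norm_upper n N N0 Nh Nt) as [C [HC0 HC]].
  apply NNPP; intro Hnot.
  assert (Hseq : forall k:nat, {v | INR k < N v /\ eps <= Rabs (zeta (v,X) / N v)}).
  { intro k. apply constructive_indefinite_description. apply NNPP; intro H'. apply Hnot.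
    exists (INR k). intros v Hv. apply Rnot_le_lt. intro Hle. apply H'. exists v; auto. }
  set (vk := fun k => proj1_sig (Hseq k)).
  assert (Hv : forall k, INR k < N (vk k) /\ eps <= Rabs (zeta (vk k, X) / N (vk k)))
    by (intro k; exact (proj2_sig (Hseq k))).
  set (sk := fun k => supn n (vk k)).
  assert (Hs : forall k, 0 < sk k /\ INR k < C * sk k).
  { intro k. destruct (Hv k) as [H1 _]. pose proof (HC (vk k)). pose proof (pos_INR k).
    pose proof (supn_ge0 n (vk k)). fold (sk k) in *.
    split; [|lra]. destruct (Rle_lt_or_eq_dec 0 (sk k)) as [?| E]; auto.
    rewrite <- E in *. nra. }
  set (uk := fun k => vscal (/ sk k) (vk k)).
  assert (Hub : forall k i, Rabs (uk k i) <= 1).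
  { intros k i. destruct (Hs k) as [H1 _]. unfold uk, vscal. rewrite Rabs_mult.
    rewrite (Rabs_pos_eq (/ sk k)) by (left; apply Rinv_0_lt_compat; lra).
    pose proof (supn_ge n (vk k) i). fold (sk k) in H.
    rewrite <- (Rinv_l (sk k)) by lra. apply Rmult_le_compat_l. left; apply Rinv_0_lt_compat; lra. exact H. }
  assert (Hsu : forall k, supn n (uk k) = 1).
  { intro k. destruct (Hs k) as [H1 _]. unfold uk. rewrite supn_scal.
    rewrite Rabs_pos_eq by (left; apply Rinv_0_lt_compat; lra). fold (sk k). field. lra. }
  destruct (BW_vec n uk 1 Hub) as [phi [us [Hinc Hconv]]].
  assert (Hus : 1/2 <= supn n us).
  { destruct (Hconv (1/2)) as [K0 HK0]. lra.
    specialize (HK0 K0 (le_n _)). pose proof (Hsu (phi K0)).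
    cut (supn n (uk (phi K0)) <= supn n us + 1/2). lra.
    apply supn_le. pose proof (supn_ge0 n us). lra. intro i.
    specialize (HK0 i). pose proof (supn_ge n us i).
    replace (uk (phi K0) i) with ((uk (phi K0) i - us i) + us i) by ring.
    eapply Rle_trans. apply Rabs_triang. lra. }
  set (rs := N us).
  assert (Hrs : 0 < rs).
  { destruct (Rle_lt_or_eq_dec 0 rs (N0 us)) as [?|E]; auto. exfalso.
    assert (Hz := Ndef us (eq_sym E)).
    assert (supn n us <= 0). { apply supn_le. lra. intro i. rewrite (Hz i). unfold vzero. rewrite Rabs_R0. lra. }
    lra. }
  destruct (Hc (us, vzero) (eps * rs / 2)) as [delta [Hd Hdelta]]. nra.
  set (rho' := rs / (2 * (C + 1))).
  assert (Hrho : 0 < rho') by (unfold rho'; apply Rdiv_lt_0_compat; lra).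
  destruct (Hconv (Rmin delta rho')) as [K1 HK1]. apply Rmin_glb_lt; lra.
  set (SX := supn m X). assert (HSX : 0 <= SX) by apply supn_ge0.
  destruct (INR_unbounded (C * SX / delta)) as [K2 HK2].
  set (p := phi (max K1 K2)).
  assert (Hp : INR K2 <= INR p).
  { apply le_INR. pose proof (incr_ge _ Hinc (max K1 K2)). unfold p. lia. }
  specialize (HK1 (max K1 K2) (Nat.le_max_l _ _)). fold p in HK1.
  destruct (Hs p) as [Hsp1 Hsp2].
  set (Y := vscal (/ sk p) X).
  assert (HC1 : 0 < C).
  { pose proof (pos_INR p). destruct (Rle_lt_or_eq_dec 0 C HC0) as [?|E]; auto. rewrite <- E in Hsp2. lra. }
  assert (HY : forall j, Rabs (snd (uk p, Y) j - snd (us, @vzero m) j) < delta).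
  { intro j. simpl. unfold Y, vscal, vzero. rewrite Rminus_0_r, Rabs_mult.
    rewrite (Rabs_pos_eq (/ sk p)) by (left; apply Rinv_0_lt_compat; lra).
    pose proof (supn_ge m X j). fold SX in H.
    assert (SX < delta * sk p).
    { apply (Rmult_lt_reg_l C). lra.
      assert (C * SX < delta * INR p).
      { unfold Rdiv in HK2. apply (Rmult_lt_reg_l (/ delta)). apply Rinv_0_lt_compat; lra.
        replace (/ delta * (delta * INR p)) with (INR p) by (field; lra). nra. }
      nra. }
    apply (Rmult_lt_reg_l (sk p)). lra.
    replace (sk p * (/ sk p * Rabs (X j))) with (Rabs (X j)) by (field; lra). nra. }
  assert (HZ := Hdelta (uk p, Y)).
  simpl in HZ. rewrite Hn1, Rminus_0_r in HZ.
  specialize (HZ (fun i => Rlt_le_trans _ _ _ (HK1 i) (Rmin_l _ _)) HY).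
  assert (HN : rs / 2 <= N (uk p)).
  { set (d := fun i => us i - uk p i).
    assert (E : us = vadd (uk p) d) by (extensionality i; unfold vadd, d; ring).
    assert (Hdn : N d <= C * rho').
    { eapply Rle_trans. apply HC. apply Rmult_le_compat_l. lra. apply supn_le. lra.
      intro i. unfold d. rewrite Rabs_minus_sym. left. eapply Rlt_le_trans. apply HK1. apply Rmin_r. }
    assert (C * rho' <= rs / 2).
    { unfold rho'. apply (Rmult_le_reg_l (2 * (C+1))). lra.
      replace (2 * (C + 1) * (C * (rs / (2 * (C + 1))))) with (C * rs) by (field; lra). nra. }
    pose proof (Nt (uk p) d). rewrite <- E in H0. fold rs in H0. lra. }
  assert (Eq1 : (vk p, X) = gscal (sk p) (uk p, Y)).
  { unfold gscal, uk, Y, vscal; simpl. f_equal; extensionality i; field; lra. }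
  assert (Eq2 : vk p = vscal (sk p) (uk p)).
  { unfold uk, vscal. extensionality i. field; lra. }
  destruct (Hv p) as [_ Hbad].
  rewrite Eq1, (hom s zeta Hq) in Hbad. rewrite Eq2, Nh, (Rabs_pos_eq (sk p)) in Hbad by lra.
  replace (sk p * zeta (uk p, Y) / (sk p * N (uk p))) with (zeta (uk p, Y) / N (uk p)) in Hbad by (field; lra).
  set (q := zeta (uk p, Y) / N (uk p)) in Hbad.
  assert (Eq3 : zeta (uk p, Y) = q * N (uk p)) by (unfold q; field; lra).
  rewrite Eq3, Rabs_mult, (Rabs_pos_eq (N (uk p))) in HZ by lra.
  nra.
Qed.
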